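(* Let $x \in \Gamma$ be a BPSP instance. Then the optimal cost and the set of optimal ICC solutions of the BPSP are, respectively, \begin{align*} \textsc{BPSP}(x) &= \frac{1}{2}\Big\{|x|-1-\max_{z\in\{-1,1\}^{|x|/2}} \sum_{i=1}^{|x|-1}(-1)^{\eta(x,i)} z_{x_i} z_{x_{i+1}}\Big\} \\ &= \frac{1}{2}\Big\{|x|-1+\#_{\mathrm{dl}}(x)-\max_{z\in\{-1,1\}^{|x|/2}} \sum_{\substack{i=1\\ x_i\neq x_{i+1}}}^{|x|-1}(-1)^{\eta(x,i)} z_{x_i} z_{x_{i+1}}\Big\},\\ \widetilde{\textsc{BPSP}^*}(x) &= \operatorname{argmax}_{z\in\{-1,1\}^{|x|/2}} \sum_{i=1}^{|x|-1}(-1)^{\eta(x,i)} z_{x_i} z_{x_{i+1}} = \operatorname{argmax}_{z\in\{-1,1\}^{|x|/2}} \sum_{\substack{i=1\\ x_i\neq x_{i+1}}}^{|x|-1}(-1)^{\eta(x,i)} z_{x_i} z_{x_{i+1}}. \end{align*}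
   Context: $\Gamma_n$ is the set of words $x=(x_1,\ldots,x_{2n})\in[n]^{2n}$ in which every symbol of $[n]=\{1,\ldots,n\}$ occurs exactly twice, and $\Gamma=\bigcup_{n\ge1}\Gamma_n$; $|x|=2n$. A valid colouring of $x$ is $f\in\{r,b\}^{2n}$ with $f_i\neq f_j$ whenever $x_i=x_j$, $i\neq j$; its cost is $\xi(f)=\sum_{i=1}^{2n-1}[f_i\neq f_{i+1}]$, and $\textsc{BPSP}(x)$ is the minimum of $\xi(f)$ over valid colourings. In the ICC encoding, $z\in\{r,b\}^n$ gives the colour of the first occurrence of each symbol (the second occurrence gets the opposite colour), and $\widetilde{\textsc{BPSP}^*}(x)$ is the set of ICC strings $z$ minimising the resulting swap count. In the Ising formulation $r\equiv 1$, $b\equiv -1$. The eta function is $\eta(x,i)=[x_{i+1}\in\{x_1,\ldots,x_i\}]\oplus[x_i\in\{x_1,\ldots,x_{i-1}\}]$ for $i\in[2n-1]$, with $[\cdot]$ the Iverson bracket and $\oplus$ exclusive or. The double letter count is $\#_{\mathrm{dl}}(x)=|\{i\in[2n-1]: x_i=x_{i+1}\}|$. *)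

(* Defs.v *)
From HB Require Import structures.
From mathcomp Require Import all_boot all_order all_algebra.
Set Implicit Arguments. Unset Strict Implicit. Unset Printing Implicit Defensive.
Import Order.TTheory GRing.Theory Num.Theory.

(* Words are sequences of naturals; symbols are 1..n as in the paper.
   Positions are 0-based: the paper's x_i is [nth 0 x (i-1)]. *)

Definition inGamma (n : nat) (x : seq nat) : Prop :=
  [/\ 0 < n, size x = 2 * n, all (fun s => 0 < s <= n) x
    & forall s, 0 < s <= n -> count_mem s x = 2].

(* Number of colour swaps xi(f) of a colour sequence (true = r, false = b). *)
Definition cost (f : seq bool) : nat :=
  \sum_(0 <= j < (size f).-1) (nth false f j != nth false f j.+1).

Definition valid (x : seq nat) (f : seq bool) : bool :=
  [forall i : 'I_(size x), forall j : 'I_(size x),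
     (i != j) && (nth 0 x i == nth 0 x j) ==> (nth false f i != nth false f j)].

(* BPSP(x): minimum cost over valid colourings f in {r,b}^{2n}.
   The default 2n of the min is never reached since a valid colouring exists
   and every cost is <= 2n - 1. *)
Definition BPSP (n : nat) (x : seq nat) : nat :=
  \big[minn/(2 * n)]_(f : (2 * n).-tuple bool | valid x f) cost f.

Definition zs (n : nat) (z : n.-tuple bool) (s : nat) : bool := nth false z s.-1.

Definition icc (n : nat) (x : seq nat) (z : n.-tuple bool) : seq bool :=
  [seq (if nth 0 x j \in take j x then ~~ zs z (nth 0 x j) else zs z (nth 0 x j))
  | j <- iota 0 (size x)].

Definition BPSPstar (n : nat) (x : seq nat) : {set n.-tuple bool} :=
  [set z | [forall z' : n.-tuple bool, cost (icc x z) <= cost (icc x z')]].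

Definition spin (b : bool) : int := if b then 1%R else (-1)%R.

(* eta(x, i) with 0-based j = i - 1:
   [x_{i+1} in {x_1..x_i}] xor [x_i in {x_1..x_{i-1}}]. *)
Definition eta (x : seq nat) (j : nat) : bool :=
  (nth 0 x j.+1 \in take j.+1 x) (+) (nth 0 x j \in take j x).

Definition dl (x : seq nat) : nat :=
  \sum_(0 <= j < (size x).-1) (nth 0 x j == nth 0 x j.+1).

Local Open Scope ring_scope.

Definition H1 (n : nat) (x : seq nat) (z : n.-tuple bool) : int :=
  \sum_(0 <= j < (size x).-1)
     (-1) ^+ eta x j * spin (zs z (nth 0 x j)) * spin (zs z (nth 0 x j.+1)).

Definition H2 (n : nat) (x : seq nat) (z : n.-tuple bool) : int :=
  \sum_(0 <= j < (size x).-1 | nth 0 x j != nth 0 x j.+1)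
     (-1) ^+ eta x j * spin (zs z (nth 0 x j)) * spin (zs z (nth 0 x j.+1)).

(* max over z in {-1,1}^n (identified with {r,b}^n via spin); the default
   -|x| is below every value since |H| <= |x| - 1 and the range is nonempty. *)
Definition maxH (n : nat) (x : seq nat) (H : n.-tuple bool -> int) : int :=
  \big[Num.max/ - (size x)%:Z]_(z : n.-tuple bool) H z.

Definition argmaxH (n : nat) (H : n.-tuple bool -> int) : {set n.-tuple bool} :=
  [set z | [forall z' : n.-tuple bool, H z' <= H z]].

(* Main.v *)
Require Import Defs.
From HB Require Import structures.
From mathcomp Require Import all_boot all_order all_algebra zify.
Import Order.TTheory GRing.Theory Num.Theory.
Set Implicit Arguments. Unset Strict Implicit.
Local Open Scope ring_scope.

Lemma first_occ n x i j : inGamma n x -> (i < j)%N -> (j < size x)%N ->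
  nth 0%N x i = nth 0%N x j -> nth 0%N x i \notin take i x.
Proof.
case=> _ _ Hall Hc Hij Hj Hx.
have Hi : (i < size x)%N by apply: ltn_trans Hij Hj.
set s := nth 0%N x i.
have Hs : (0 < s <= n)%N := allP Hall s (mem_nth 0%N Hi).
have E := Hc s Hs.
rewrite -{1}(cat_take_drop i x) count_cat (drop_nth 0%N Hi) /= -/s eqxx in E.
have Hin : s \in drop i.+1 x.
  rewrite /s Hx.
  have -> : nth 0%N x j = nth 0%N (drop i.+1 x) (j - i.+1).
    by rewrite nth_drop subnKC.
  apply: mem_nth; rewrite size_drop ltn_sub2r //; exact: leq_ltn_trans Hij Hj.
move: Hin; rewrite -has_pred1 has_count => Hp.
apply/count_memPn; move: E Hp; set a := count _ (take i x); set b := count _ (drop i.+1 x); clear; lia.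
Qed.

Lemma nth_icc n x (z : n.-tuple bool) j : (j < size x)%N ->
  nth false (icc x z) j = (nth 0%N x j \in take j x) (+) zs z (nth 0%N x j).
Proof.
move=> Hj; rewrite /icc (nth_map 0%N) ?size_iota // nth_iota // add0n.
by case: (_ \in _); case: (zs _ _).
Qed.

Lemma size_icc n x (z : n.-tuple bool) : size (icc x z) = size x.
Proof. by rewrite size_map size_iota. Qed.

Lemma term_id (a b c d : bool) :
  ((c (+) a != d (+) b) : nat)%:Z * 2 = 1 - (-1) ^+ (d (+) c) * spin a * spin b.
Proof. by case: a; case: b; case: c; case: d. Qed.

Lemma cost_formula n x (z : n.-tuple bool) (f : seq bool) :
  (0 < size x)%N -> size f = size x ->
  (forall j, (j < size x)%N -> nth false f j = (nth 0%N x j \in take j x) (+) zs z (nth 0%N x j)) ->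
  (cost f)%:Z * 2 = (size x)%:Z - 1 - H1 x z.
Proof.
move=> Hx Hf Hn.
rewrite /cost Hf /H1 -natz natr_sum mulr_suml.
have -> : (size x)%:Z - 1 = \sum_(0 <= j < (size x).-1) (1 : int).
  rewrite sumr_const_nat subn0; case: (size x) Hx => // m _ /=.
  by rewrite -natz mulrSr addrK.
rewrite -sumrB; apply: eq_big_nat => j /andP[_ Hj].
rewrite natz !Hn; try lia.
rewrite /eta; exact: term_id.
Qed.

Lemma maxH_spec n x (H : n.-tuple bool -> int) :
  (forall z, - (size x)%:Z < H z) ->
  (forall z, H z <= maxH x H) /\ exists z, maxH x H = H z.
Proof.
move=> Hlow.
have up : forall z, H z <= maxH x H.
  by move=> z; rewrite /maxH (bigD1 z) //= le_max lexx.
split=> //.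
have : maxH x H = - (size x)%:Z \/ exists z, maxH x H = H z.
  rewrite /maxH; apply: (big_ind (fun v => v = - (size x)%:Z \/ exists z, v = H z)).
  - by left.
  - move=> a b Ha Hb; case: leP => _; [exact: Hb | exact: Ha].
  - by move=> z _; right; exists z.
case=> // E; exfalso.
have := up [tuple of nseq n false]; rewrite E.
by move: (Hlow [tuple of nseq n false]); rewrite ltNge => /negP.
Qed.

Lemma icc_pair n x (z : n.-tuple bool) i j : inGamma n x -> (i < j)%N -> (j < size x)%N ->
  nth 0%N x i = nth 0%N x j -> nth false (icc x z) i != nth false (icc x z) j.
Proof.
move=> HG Hij Hj Hx.
have Hi : (i < size x)%N by apply: ltn_trans Hij Hj.
rewrite !nth_icc // (negbTE (first_occ HG Hij Hj Hx)).
have -> : (nth 0%N x j \in take j x).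
  rewrite -Hx -(nth_take 0%N Hij); apply: mem_nth.
  by rewrite size_take; case: ifP => // _; apply: ltn_trans Hij Hj.
by rewrite Hx; case: (zs _ _).
Qed.

Lemma icc_valid n x (z : n.-tuple bool) : inGamma n x -> valid x (icc x z).
Proof.
move=> HG; apply/forallP => i; apply/forallP => j; apply/implyP => /andP[Hij /eqP Hx].
case: (ltngtP i j) => H.
- exact: icc_pair.
- by rewrite eq_sym; apply: icc_pair.
- by move: Hij; rewrite (val_inj H) eqxx.
Qed.

Lemma validP x (f : seq bool) a b : valid x f -> (a < size x)%N -> (b < size x)%N -> a != b ->
      nth 0%N x a = nth 0%N x b -> nth false f a != nth false f b.
Proof.
move=> Hv Ha Hb Hab Hxab.
move/forallP: Hv => /(_ (Ordinal Ha)) /forallP /(_ (Ordinal Hb)) /implyP; apply.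
rewrite -val_eqE /=.
by rewrite Hab Hxab eqxx.
Qed.

Lemma valid_icc n x (f : seq bool) : inGamma n x -> size f = size x -> valid x f ->
  exists z : n.-tuple bool, forall j, (j < size x)%N ->
    nth false f j = (nth 0%N x j \in take j x) (+) zs z (nth 0%N x j).
Proof.
move=> HG Hf Hv.
have Hall : all (fun s => (0 < s <= n)%N) x by case: HG.
pose zz := [tuple of mkseq (fun i => nth false f (index i.+1 x)) n].
exists zz => j Hj.
set s := nth 0%N x j.
have Hs : (0 < s <= n)%N := allP Hall s (mem_nth 0%N Hj).
have -> : zs zz s = nth false f (index s x).
  rewrite /zs /= nth_mkseq; last by case/andP: Hs => H1 H2; rewrite prednK.
  by case/andP: Hs => H1 _; rewrite prednK.
have Hsj : s \in take j.+1 x.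
  by rewrite /s -(nth_take 0%N (ltnSn j)); apply: mem_nth; rewrite size_take; case: ifP.
rewrite in_take_leq // in Hsj.
case Hin: (s \in take j x).
- have Hk := Hin; rewrite (in_take_leq _ (ltnW Hj)) in Hk.
  have Hsx : s \in x := mem_nth 0%N Hj.
  have V := validP Hv.
  have := V _ _ (leq_trans Hk (ltnW Hj)) Hj.
  rewrite nth_index // neq_ltn Hk => /(_ isT erefl).
  by case: (nth false f j); case: (nth false f (index s x)).
- rewrite (in_take_leq _ (ltnW Hj)) in Hin.
  have -> : index s x = j by apply/eqP; rewrite eqn_leq -ltnS Hsj leqNgt Hin.
  by case: (nth false f j).
Qed.

Lemma bigmin_le_gen (I : eqType) (r : seq I) (P : pred I) (F : I -> nat) d t :
  t \in r -> P t -> (\big[minn/d]_(i <- r | P i) F i <= F t)%N.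
Proof.
elim: r => // a r IH; rewrite inE big_cons => /orP[/eqP <- -> | Ht Pt].
  exact: geq_minl.
case: (P a); last exact: IH.
by apply: leq_trans (geq_minr _ _) (IH Ht Pt).
Qed.

Lemma cost_le (f : seq bool) : (cost f <= (size f).-1)%N.
Proof.
rewrite /cost; apply: (@leq_trans (\sum_(0 <= j < (size f).-1) 1)%N).
  by apply: leq_sum => i _; exact: leq_b1.
by rewrite sum_nat_const_nat muln1 subn0.
Qed.

Lemma BPSP_spec n x : inGamma n x ->
  (exists z : n.-tuple bool, BPSP n x = cost (icc x z)) /\
  (forall z : n.-tuple bool, (BPSP n x <= cost (icc x z))%N).
Proof.
move=> HG.
have Hsz : size x = (2 * n)%N by case: HG.
have Hn : (0 < n)%N by case: HG.
have up : forall z : n.-tuple bool, (BPSP n x <= cost (icc x z))%N.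
  move=> z.
  have Hs : size (icc x z) == (2 * n)%N by rewrite size_icc Hsz.
  rewrite /BPSP; apply: (@bigmin_le_gen _ _ _ _ _ (Tuple Hs)); first exact: mem_index_enum.
  exact: icc_valid.
split=> //.
have : BPSP n x = (2 * n)%N \/ exists f : (2 * n).-tuple bool, valid x f /\ BPSP n x = cost f.
  rewrite /BPSP; apply: (big_ind (fun v => v = (2 * n)%N \/ exists f : (2 * n).-tuple bool, valid x f /\ v = cost f)).
  - by left.
  - move=> a b Ha Hb; rewrite /minn; case: ifP => _; [exact: Ha | exact: Hb].
  - by move=> f Hf; right; exists f.
case=> [E | [f [Hf E]]].
- exfalso.
  pose z0 := [tuple of nseq n false].
  have := up z0; rewrite E.
  have := cost_le (icc x z0).
  rewrite size_icc Hsz; move: Hn; clear; lia.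
- have Hfs : size f = size x by rewrite size_tuple Hsz.
  have [z Hz] := valid_icc HG Hfs Hf.
  exists z; rewrite E.
  have Hx0 : (0 < size x)%N by rewrite Hsz muln_gt0.
  have A := cost_formula Hx0 Hfs Hz.
  have B := @cost_formula n x z (icc x z) Hx0 (size_icc _ _) (fun j Hj => nth_icc z Hj).
  by move: A; rewrite -B => /eqP; rewrite (inj_eq (mulIf _)) // => /eqP [].
Qed.

Lemma H12 n x (z : n.-tuple bool) : inGamma n x -> H1 x z = H2 x z - (dl x)%:Z.
Proof.
move=> HG.
rewrite /H2 big_mkcond /dl -natz natr_sum -sumrB /H1.
apply: eq_big_nat => j /andP[_ Hj].
have Hj1 : (j.+1 < size x)%N by rewrite -(ltn_predRL); exact: Hj.
case: (nth 0%N x j =P nth 0%N x j.+1) => Heq /=; last by rewrite subr0.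
have E : Defs.eta x j = true.
  rewrite /Defs.eta (negbTE (first_occ HG (ltnSn j) Hj1 Heq)) -Heq.
  rewrite -(nth_take 0%N (ltnSn j)); rewrite addbF; apply: mem_nth.
  by rewrite size_take Hj1.
rewrite E -Heq sub0r.
by case: (zs _ _).
Qed.

Unset Implicit Arguments.

Theorem corollary5 (n : nat) (x : seq nat) :
  inGamma n x ->
  [/\ (BPSP n x)%:Q = 2^-1 * ((size x)%:Q - 1 - (maxH x (H1 (n:=n) x))%:~R),
      (BPSP n x)%:Q = 2^-1 * ((size x)%:Q - 1 + (dl x)%:Q - (maxH x (H2 (n:=n) x))%:~R),
      BPSPstar n x = argmaxH (H1 (n:=n) x)
    & BPSPstar n x = argmaxH (H2 (n:=n) x)].
Proof.
move=> HG.
have Hsz : size x = (2 * n)%N by case: HG.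
have Hn : (0 < n)%N by case: HG.
have Hx0 : (0 < size x)%N by rewrite Hsz muln_gt0.
have CF : forall z : n.-tuple bool, (cost (icc x z))%:Z + (cost (icc x z))%:Z = (size x)%:Z - 1 - H1 x z.
  by move=> z; rewrite -(cost_formula Hx0 (size_icc _ _) (fun j Hj => nth_icc z Hj)) mulr_natr mulr2n.
have CL : forall z : n.-tuple bool, (cost (icc x z) <= (size x).-1)%N.
  by move=> z; rewrite -(size_icc x z); exact: cost_le.
have Hlow1 : forall z : n.-tuple bool, - (size x)%:Z < H1 x z.
  move=> z; have := CF z; have := CL z; move: Hx0; clear; lia.
have Hlow2 : forall z : n.-tuple bool, - (size x)%:Z < H2 x z.
  move=> z; have := Hlow1 z; rewrite (H12 z HG); clear; lia.
have [up1 [z1 E1]] := maxH_spec Hlow1.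
have [up2 [z2 E2]] := maxH_spec Hlow2.
have [[zb Eb] lowB] := BPSP_spec HG.
have K1 : (BPSP n x)%:Z + (BPSP n x)%:Z = (size x)%:Z - 1 - maxH x (H1 (n:=n) x).
  have := CF zb; have := CF z1; have := up1 zb; have := lowB z1.
  have := E1; rewrite Eb; lia.
have K2 : (BPSP n x)%:Z + (BPSP n x)%:Z = (size x)%:Z - 1 + (dl x)%:Z - maxH x (H2 (n:=n) x).
  have := H12 z1 HG; have := H12 z2 HG; have := up1 z2; have := up2 z1.
  have := E1; have := E2; lia.
have R : forall (b s : nat) (M : int), b%:Z + b%:Z = s%:Z - 1 - M ->
    (b%:Q = 2^-1 * (s%:Q - 1 - M%:~R) :> rat).
  move=> b s M HK.
  have Q : ((b%:Z * 2)%:~R : rat) = (s%:Z - 1 - M)%:~R by rewrite -HK mulr_natr mulr2n.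
  move: Q; rewrite !rmorphB rmorphM rmorph1 /= => Q.
  have T : (2%:~R : rat) = 2 by [].
  by rewrite -Q T mulrC mulfK.
split.
- exact: R.
- have -> : (size x)%:Q - 1 + (dl x)%:Q = (size x + dl x)%:Q - 1 by rewrite PoszD rmorphD addrAC.
  apply: R; rewrite K2; lia.
- apply/setP => z; rewrite !inE; apply: eq_forallb => z'.
  have := CF z; have := CF z'; move=> A B; apply/idP/idP => H; lia.
- apply/setP => z; rewrite !inE; apply: eq_forallb => z'.
  have := CF z; have := CF z'; have := H12 z HG; have := H12 z' HG.
  move=> A B C D; apply/idP/idP => H; lia.
Qed.
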